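(* Let $n,d$ be positive integers and $\underline q=(q_1,\ldots,q_n)\in(\Bbbk^* )^n$ with $q_i^d\neq1$ for all $i$. If at least one coordinate $q_i$ is a root of unity, then $A(n,d,\underline q)$ admits a $\Bbbk$-algebra endomorphism that is not invertible.
   Context: Let $\Bbbk$ be a field. $A(n,d,\underline{q})$ is the $\Bbbk$-algebra generated by $x_i,y_i,h_i,h_i^{-1}$ ($1\le i\le n$) subject to $h_ih_i^{-1}=h_i^{-1}h_i=1$, $x_ih_i=q_ih_ix_i$, $y_ih_i=q_i^{-1}h_iy_i$, $x_iy_i=(q_ih_i)^d-1$, $y_ix_i=h_i^d-1$, and, for $i\neq j$, each of $h_i^{\pm1},x_i,y_i$ commutes with each of $h_j^{\pm1},x_j,y_j$. *)

(* Defs.v *)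
From HB Require Import structures.
From mathcomp Require Import all_boot all_order all_algebra.
Set Implicit Arguments. Unset Strict Implicit. Unset Printing Implicit Defensive.
Import GRing.Theory.
Local Open Scope ring_scope.

Definition alg_hom (F : fieldType) (A B : algType F) (f : A -> B) : Prop :=
  [/\ forall a b : A, f (a + b) = f a + f b,
      forall (c : F) (a : A), f (c *: a) = c *: f a,
      forall a b : A, f (a * b) = f a * f b &
      f 1 = 1].

Definition A_rels (F : fieldType) (n d : nat) (q : 'I_n -> F) (B : algType F)
    (x y h hi : 'I_n -> B) : Prop :=
  (forall i : 'I_n,
     [/\ h i * hi i = 1 /\ hi i * h i = 1,
         x i * h i = q i *: (h i * x i),
         y i * h i = (q i)^-1 *: (h i * y i),
         x i * y i = (q i *: h i) ^+ d - 1 &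
         y i * x i = h i ^+ d - 1]) /\
  (forall i j : 'I_n, i != j ->
     forall u v : B, u \in [:: h i; hi i; x i; y i] ->
                     v \in [:: h j; hi j; x j; y j] -> u * v = v * u).

Definition is_A_presentation (F : fieldType) (n d : nat) (q : 'I_n -> F)
    (A : algType F) (x y h hi : 'I_n -> A) : Prop :=
  A_rels d q x y h hi /\
  forall (B : algType F) (xB yB hB hiB : 'I_n -> B),
    A_rels d q xB yB hB hiB ->
    exists f : A -> B,
      [/\ alg_hom f,
          (forall i, [/\ f (x i) = xB i, f (y i) = yB i,
                         f (h i) = hB i & f (hi i) = hiB i]) &
          forall g : A -> B, alg_hom g ->
            (forall i, [/\ g (x i) = xB i, g (y i) = yB i,
                           g (h i) = hB i & g (hi i) = hiB i]) ->
            forall a, g a = f a].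

(* Main.v *)
Require Import Defs.
From HB Require Import structures.
From mathcomp Require Import all_boot all_order all_algebra.
From mathcomp Require Import boolp.
From mathcomp Require Import ring.
Set Implicit Arguments. Unset Strict Implicit. Unset Printing Implicit Defensive.
Import GRing.Theory.
Local Open Scope ring_scope.


Section OpAlg.
Variables (F : fieldType) (n : nat).
Definition T := 'I_n -> (int * int)%type.
Definition V := T -> F.
Definition vadd (u w : V) : V := fun z => u z + w z.
Definition vscale (c : F) (u : V) : V := fun z => c * u z.
Definition linP (f : V -> V) := (forall u w, f (vadd u w) = vadd (f u) (f w)) /\
   (forall c u, f (vscale c u) = vscale c (f u)).
Record Op := MkOp { opf :> V -> V; opP : linP opf }.

Lemma op_eq (f g : Op) : (forall v z, f v z = g v z) -> f = g.
Proof.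
case: f g => f fP [g gP] /= E.
have efg : f = g by apply: functional_extensionality_dep => v; apply: functional_extensionality_dep => z; apply: E.
subst g; congr MkOp; exact: Prop_irrelevance.
Qed.

HB.instance Definition _ := gen_eqMixin Op.
HB.instance Definition _ := gen_choiceMixin Op.

Lemma linP_add (f g : Op) : linP (fun v => vadd (f v) (g v)).
Proof.
case: f g => f [fa fs] [g [ga gs]]; split=> [u w|c u] /=.
  rewrite fa ga; apply: functional_extensionality_dep => z; rewrite /vadd /=.
  by rewrite addrACA.
rewrite fs gs; apply: functional_extensionality_dep => z; rewrite /vadd /vscale /=.
by rewrite mulrDr.
Qed.
Lemma linP_opp (f : Op) : linP (fun v => vscale (-1) (f v)).
Proof.
case: f => f [fa fs]; split=> [u w|c u] /=.
  rewrite fa; apply: functional_extensionality_dep => z; rewrite /vadd /vscale /=.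
  by rewrite mulrDr.
rewrite fs; apply: functional_extensionality_dep => z; rewrite /vscale /=.
by rewrite mulrCA.
Qed.
Lemma linP_zero : linP (fun v => (fun _ => 0) : V).
Proof.
split=> [u w|c u]; apply: functional_extensionality_dep => z; rewrite /vadd /vscale /=.
  by rewrite addr0.
by rewrite mulr0.
Qed.
Lemma linP_comp (f g : Op) : linP (fun v => f (g v)).
Proof.
case: f g => f [fa fs] [g [ga gs]]; split=> [u w|c u] /=.
  by rewrite ga fa.
by rewrite gs fs.
Qed.
Lemma linP_id : linP (fun v => v).
Proof. by []. Qed.
Lemma linP_scale c (f : Op) : linP (fun v => vscale c (f v)).
Proof.
case: f => f [fa fs]; split=> [u w|d u] /=.
  rewrite fa; apply: functional_extensionality_dep => z; rewrite /vadd /vscale /=.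
  by rewrite mulrDr.
rewrite fs; apply: functional_extensionality_dep => z; rewrite /vscale /=.
by rewrite mulrCA.
Qed.

Definition op_add f g := MkOp (linP_add f g).
Definition op_opp f := MkOp (linP_opp f).
Definition op_zero := MkOp linP_zero.
Definition op_mul f g := MkOp (linP_comp f g).
Definition op_one := MkOp linP_id.
Definition op_scale c f := MkOp (linP_scale c f).

Lemma op_addA : associative op_add.
Proof. by move=> a b c; apply: op_eq => v z /=; rewrite /vadd addrA. Qed.
Lemma op_addC : commutative op_add.
Proof. by move=> a b; apply: op_eq => v z /=; rewrite /vadd addrC. Qed.
Lemma op_add0 : left_id op_zero op_add.
Proof. by move=> a; apply: op_eq => v z /=; rewrite /vadd add0r. Qed.
Lemma op_addN : left_inverse op_zero op_opp op_add.
Proof. by move=> a; apply: op_eq => v z /=; rewrite /vadd /vscale mulN1r addNr. Qed.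

HB.instance Definition _ := GRing.isZmodule.Build Op op_addA op_addC op_add0 op_addN.

Lemma op_mulA : associative op_mul.
Proof. by move=> a b c; apply: op_eq. Qed.
Lemma op_mul1 : left_id op_one op_mul.
Proof. by move=> a; apply: op_eq. Qed.
Lemma op_mulr1 : right_id op_one op_mul.
Proof. by move=> a; apply: op_eq. Qed.
Lemma op_mulDl : left_distributive op_mul +%R.
Proof. by move=> a b c; apply: op_eq. Qed.
Lemma op_mulDr : right_distributive op_mul +%R.
Proof.
move=> a b c; apply: op_eq => v z /=.
by case: a => a [aa aS] /=; rewrite aa.
Qed.
Definition t0 : T := fun _ => (0%Z, 0%Z).
Lemma op_one_neq0 : op_one != 0.
Proof.
apply/eqP => E.
have := congr1 (fun f : Op => f (fun _ => 1) t0) E => /=.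
by move/eqP; rewrite oner_eq0.
Qed.

HB.instance Definition _ := GRing.Zmodule_isNzRing.Build Op op_mulA op_mul1 op_mulr1 op_mulDl op_mulDr op_one_neq0.

Lemma op_scaleA a b v : op_scale a (op_scale b v) = op_scale (a * b) v.
Proof. by apply: op_eq => u z /=; rewrite /vscale mulrA. Qed.
Lemma op_scale1 : left_id 1 op_scale.
Proof. by move=> a; apply: op_eq => u z /=; rewrite /vscale mul1r. Qed.
Lemma op_scaleDr : right_distributive op_scale +%R.
Proof. by move=> a b c; apply: op_eq => u z /=; rewrite /vscale /vadd mulrDr. Qed.
Lemma op_scaleDl v : {morph op_scale^~ v: a b / a + b}.
Proof. by move=> a b; apply: op_eq => u z /=; rewrite /vscale /vadd mulrDl. Qed.
HB.instance Definition _ := GRing.Zmodule_isLmodule.Build F Op op_scaleA op_scale1 op_scaleDr op_scaleDl.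
Lemma op_scaleAl (a : F) (u v : Op) : a *: (u * v) = (a *: u) * v.
Proof. by apply: op_eq. Qed.
HB.instance Definition _ := GRing.Lmodule_isLalgebra.Build F Op op_scaleAl.
Lemma op_scaleAr (a : F) (u v : Op) : a *: (u * v) = u * (a *: v).
Proof.
apply: op_eq => w z /=; case: u => u [ua uS] /=.
by rewrite uS.
Qed.
HB.instance Definition _ := GRing.Lalgebra_isAlgebra.Build F Op op_scaleAr.

End OpAlg.


Section B.
Variables (F : fieldType) (n : nat).
Local Notation Op := (Op F n).
Local Notation T := (T n).

Lemma opM (a b : Op) v : (a * b) v = a (b v). Proof. by []. Qed.
Lemma opD (a b : Op) v z : (a + b) v z = a v z + b v z. Proof. by []. Qed.
Lemma opB (a b : Op) v z : (a - b) v z = a v z - b v z.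
Proof. by rewrite opD /= /vscale mulN1r. Qed.
Lemma opZ c (a : Op) v z : (c *: a) v z = c * a v z. Proof. by []. Qed.
Lemma op1 v : (1 : Op) v = v. Proof. by []. Qed.

Lemma linP_w (al : T -> F) (sg : T -> T) : linP (fun v : V F n => fun z => al z * v (sg z)).
Proof.
split=> [u w|c u]; apply: functional_extensionality_dep => z; rewrite /vadd /vscale /=.
  by rewrite mulrDr.
by rewrite mulrCA.
Qed.
Definition wop al sg : Op := MkOp (linP_w al sg).
Lemma wopE al sg v z : wop al sg v z = al z * v (sg z). Proof. by []. Qed.

Definition upd (z : T) (i : 'I_n) (w : int * int) : T := fun j => if j == i then w else z j.
Lemma upd_same z i w : upd z i w i = w. Proof. by rewrite /upd eqxx. Qed.
Lemma upd_other z i j w : j != i -> upd z i w j = z j. Proof. by rewrite /upd => /negbTE ->. Qed.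
Lemma upd_upd z i w w' : upd (upd z i w) i w' = upd z i w'.
Proof. apply: functional_extensionality_dep => j; rewrite /upd; by case: (j == i). Qed.
Lemma upd_id z i : upd z i (z i) = z.
Proof. apply: functional_extensionality_dep => j; rewrite /upd; by case: eqP => [->|]. Qed.
Lemma upd_comm z i j w w' : i != j -> upd (upd z i w) j w' = upd (upd z j w') i w.
Proof.
move=> ij; apply: functional_extensionality_dep => k; rewrite /upd.
case: (eqVneq k j) => [->|kj]; first by rewrite eq_sym (negbTE ij).
by case: (eqVneq k i).
Qed.
Definition iop i (a : int * int -> F) (s : int * int -> int * int) : Op :=
  wop (fun z => a (z i)) (fun z => upd z i (s (z i))).
Lemma iopE i a s v z : iop i a s v z = a (z i) * v (upd z i (s (z i))). Proof. by []. Qed.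
Lemma iopM i a s b t : iop i a s * iop i b t = iop i (fun w => a w * b (s w)) (fun w => t (s w)).
Proof. by apply: op_eq => v z; rewrite opM !iopE upd_same upd_upd mulrA. Qed.
Lemma iop_ext i a s b t : (forall w, a w = b w) -> (forall w, s w = t w) -> iop i a s = iop i b t.
Proof. by move=> ab st; apply: op_eq => v z; rewrite !iopE ab st. Qed.
Lemma iopZ i c a s : c *: iop i a s = iop i (fun w => c * a w) s.
Proof. by apply: op_eq => v z; rewrite opZ !iopE mulrA. Qed.
Lemma iop1 i : iop i (fun _ => 1) id = 1.
Proof. by apply: op_eq => v z; rewrite iopE mul1r upd_id. Qed.
Lemma iop_comm i j a s b t : i != j -> iop i a s * iop j b t = iop j b t * iop i a s.
Proof.
move=> ij; apply: op_eq => v z; rewrite !opM !iopE !upd_other 1?eq_sym //.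
have ji : j != i by rewrite eq_sym.
rewrite mulrCA upd_comm //.
by rewrite eq_sym.
Qed.

Variables (d : nat) (q : 'I_n -> F).
Hypothesis hq : forall i, q i != 0.

Definition Hop i := iop i (fun w => q i ^ w.1) (fun w => (w.1, w.2 - 1)).
Definition Hiop i := iop i (fun w => q i ^ (- w.1)) (fun w => (w.1, w.2 + 1)).
Definition Xop i := iop i (fun _ => 1) (fun w => (w.1 + 1, w.2)).
Definition Xiop i := iop i (fun _ => 1) (fun w => (w.1 - 1, w.2)).
Definition Yop i := iop i (fun w => (q i ^ w.1) ^+ d) (fun w => (w.1 - 1, w.2 - d%:Z))
   - iop i (fun _ => 1) (fun w => (w.1 - 1, w.2)).

Lemma HopX i k : Hop i ^+ k = iop i (fun w => (q i ^ w.1) ^+ k) (fun w => (w.1, w.2 - k%:Z)).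
Proof.
elim: k => [|k IH].
  by rewrite expr0 -(iop1 i); apply: iop_ext => [w|[a b]] /=; rewrite ?expr0 ?subr0.
rewrite exprS IH iopM; apply: iop_ext => [w|w] /=; first by rewrite exprS.
by rewrite -addrA -opprD -add1n PoszD.
Qed.

Lemma HopHi i : Hop i * Hiop i = 1.
Proof.
rewrite iopM -(iop1 i); apply: iop_ext => [[a b]|[a b]] /=.
  by rewrite -expfzDr // addrN expr0z.
by rewrite subrK.
Qed.
Lemma HiopH i : Hiop i * Hop i = 1.
Proof.
rewrite iopM -(iop1 i); apply: iop_ext => [[a b]|[a b]] /=.
  by rewrite -expfzDr // addNr expr0z.
by rewrite addrK.
Qed.
Lemma XopXi i : Xop i * Xiop i = 1.
Proof. by rewrite iopM -(iop1 i); apply: iop_ext => [[a b]|[a b]] /=; rewrite ?mulr1 ?addrK. Qed.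
Lemma XiopX i : Xiop i * Xop i = 1.
Proof. by rewrite iopM -(iop1 i); apply: iop_ext => [[a b]|[a b]] /=; rewrite ?mulr1 ?subrK. Qed.
Lemma XH i : Xop i * Hop i = q i *: (Hop i * Xop i).
Proof.
rewrite !iopM iopZ; apply: iop_ext => [[a b]|[a b]] //=.
by rewrite mul1r mulr1 expfzDr // expr1z mulrC.
Qed.
Lemma qm1 i a : q i ^ (a - 1) = (q i)^-1 * q i ^ a.
Proof. by rewrite expfzDr // -invr_expz expr1z mulrC. Qed.
Lemma YH i : Yop i * Hop i = (q i)^-1 *: (Hop i * Yop i).
Proof.
rewrite /Yop mulrBl mulrBr scalerBr !iopM !iopZ; congr (_ - _); apply: iop_ext => [[a b]|[a b]] //=.
- by rewrite qm1; ring.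
- by rewrite -!addrA [(- d%:Z) + _]addrC.
- by rewrite qm1; ring.
Qed.
Lemma XY i : Xop i * Yop i = (q i *: Hop i) ^+ d - 1.
Proof.
rewrite /Yop mulrBr exprZn HopX !iopM iopZ -(iop1 i); congr (_ - _); apply: iop_ext => [[a b]|[a b]] //=.
- by rewrite mul1r expfzDr // expr1z exprMn mulrC.
- by rewrite addrK.
- by rewrite mulr1.
- by rewrite addrK.
Qed.
Lemma YX i : Yop i * Xop i = Hop i ^+ d - 1.
Proof.
rewrite /Yop mulrBl HopX !iopM -(iop1 i); congr (_ - _); apply: iop_ext => [[a b]|[a b]] //=.
- by rewrite mulr1.
- by rewrite subrK.
- by rewrite mulr1.
- by rewrite subrK.
Qed.

Variables (i0 : 'I_n) (L : nat).
Hypothesis L2 : (1 < L)%N.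
Hypothesis hq1 : q i0 != 1.
Definition cf (b : int) : F := if (b %% L%:Z)%Z == 0 then 1 else q i0.
Lemma cf_neq0 b : cf b != 0.
Proof. by rewrite /cf; case: ifP => _; rewrite ?oner_neq0 ?hq. Qed.
Definition Uop := iop i0 (fun w => cf w.2) id.
Definition Uiop := iop i0 (fun w => (cf w.2)^-1) id.
Lemma UUi : Uop * Uiop = 1.
Proof. by rewrite iopM -(iop1 i0); apply: iop_ext => // w; rewrite mulfV ?cf_neq0. Qed.
Lemma UiU : Uiop * Uop = 1.
Proof. by rewrite iopM -(iop1 i0); apply: iop_ext => // w; rewrite mulVf ?cf_neq0. Qed.
Lemma U_comm_other j a s : j != i0 -> GRing.comm Uop (iop j a s).
Proof. by move=> ji; rewrite /GRing.comm iop_comm // eq_sym. Qed.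
Lemma U_comm_X : GRing.comm Uop (Xop i0).
Proof. by rewrite /GRing.comm !iopM; apply: iop_ext => // w; rewrite mulr1 mul1r. Qed.
Lemma U_comm_HL : GRing.comm Uop (Hop i0 ^+ L).
Proof.
rewrite /GRing.comm HopX !iopM; apply: iop_ext => // [[a b]] /=.
rewrite mulrC; congr (_ * _); rewrite /cf.
have -> : ((b - L%:Z) %% L%:Z)%Z = (b %% L%:Z)%Z.
  by rewrite -[in RHS](subrK L%:Z b) modzDr.
by [].
Qed.
Lemma U_ncomm_H : Uop * Hop i0 != Hop i0 * Uop.
Proof.
apply/eqP => E.
pose z0 : T := fun _ => (0%Z, 0%Z).
pose v : V F n := fun z => if z i0 == (0%Z, 0%Z) then 1 else 0.
have := congr1 (fun f : Op => f v (upd z0 i0 (0%Z, 1%Z))) E.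
rewrite /= /v /upd /= !eqxx /= subrr expr0z !mul1r !mulr1.
rewrite /cf modz_small; last by rewrite /= ltz_nat L2.
rewrite mod0z eqxx /= => /eqP.
by rewrite (negbTE hq1).
Qed.

End B.


Lemma commZ (F : fieldType) (A : algType F) (a b : A) (c : F) :
  GRing.comm a b -> GRing.comm a (c *: b).
Proof. by rewrite /GRing.comm => ab; rewrite -scalerAr ab scalerAl. Qed.
Lemma comm_sym (R : ringType) (a b : R) : GRing.comm a b -> GRing.comm b a.
Proof. by rewrite /GRing.comm => ->. Qed.

Section ASide.
Variables (F : fieldType) (n d : nat) (q : 'I_n -> F) (A : algType F) (x y h hi : 'I_n -> A).
Hypothesis hq : forall i, q i != 0.
Hypothesis rels : A_rels d q x y h hi.
Variable e : 'I_n -> nat.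
Hypothesis he : forall i, q i ^+ e i = q i.

Definition Gs i := \sum_(j < e i) ((q i *: h i) ^+ d) ^+ j.
Definition X' i := x i.
Definition H' i := h i ^+ e i.
Definition Hi' i := hi i ^+ e i.
Definition Y' i := y i * Gs i.

Lemma xhk i k : x i * h i ^+ k = q i ^+ k *: (h i ^+ k * x i).
Proof.
have [_ xh _ _ _] := rels.1 i.
elim: k => [|k IH]; first by rewrite !expr0 mulr1 mul1r scale1r.
by rewrite exprSr mulrA IH -scalerAl -!mulrA xh -scalerAr scalerA -exprSr.
Qed.
Lemma yhk i k : y i * h i ^+ k = (q i)^-1 ^+ k *: (h i ^+ k * y i).
Proof.
have [_ _ yh _ _] := rels.1 i.
elim: k => [|k IH]; first by rewrite !expr0 mulr1 mul1r scale1r.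
by rewrite exprSr mulrA IH -scalerAl -!mulrA yh -scalerAr scalerA -exprSr.
Qed.
Lemma comm_hG i : GRing.comm (h i) (Gs i).
Proof.
apply: commr_sum => j _; apply: commrX; apply: commrX; apply: commZ; exact: commr_refl.
Qed.
Lemma Gx i : Gs i * x i = x i * \sum_(j < e i) (h i ^+ d) ^+ j.
Proof.
rewrite mulr_suml mulr_sumr; apply: eq_bigr => j _.
by rewrite !exprZn -!exprM -scalerAl -xhk exprM.
Qed.
Lemma fam_rel1 i :
  [/\ H' i * Hi' i = 1 /\ Hi' i * H' i = 1,
      X' i * H' i = q i *: (H' i * X' i),
      Y' i * H' i = (q i)^-1 *: (H' i * Y' i),
      X' i * Y' i = (q i *: H' i) ^+ d - 1 &
      Y' i * X' i = H' i ^+ d - 1].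
Proof.
have [[hhi hih] xh yh xy yx] := rels.1 i.
have chhi : GRing.comm (h i) (hi i) by rewrite /GRing.comm hhi hih.
rewrite /H' /Hi' /X' /Y'; split.
- split; rewrite -exprMn_comm ?hhi ?hih ?expr1n //; exact: comm_sym.
- by rewrite xhk he.
- have cG : GRing.comm (Gs i) (h i ^+ e i) := commrX _ (comm_sym (comm_hG i)).
  by rewrite -mulrA cG (mulrA (y i)) yhk exprVn he -scalerAl mulrA.
- rewrite mulrA xy -subrX1 (exprZn (q i) (h i)) (exprZn (q i ^+ d)) (exprZn (q i) (h i ^+ e i)).
  by rewrite -!exprM (mulnC d) [q i ^+ (e i * d)]exprM he.
- by rewrite -mulrA Gx mulrA yx -subrX1 exprAC.
Qed.
Lemma commF j (w : A) :
  GRing.comm w (h j) -> GRing.comm w (hi j) -> GRing.comm w (x j) -> GRing.comm w (y j) ->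
  forall u, u \in [:: H' j; Hi' j; X' j; Y' j] -> GRing.comm w u.
Proof.
move=> ch chi cx cy u; rewrite !inE => /or4P [] /eqP ->.
- exact: commrX.
- exact: commrX.
- exact: cx.
- apply: commrM => //; apply: commr_sum => k _; apply: commrX; apply: commrX.
  exact: commZ.
Qed.

Lemma fam_rels : A_rels d q X' Y' H' Hi'.
Proof.
split; first exact: fam_rel1.
move=> i j ij u v ui vj.
have gens : forall g, g \in [:: h i; hi i; x i; y i] -> GRing.comm g v.
  move=> g gi; apply: commF vj; apply: (rels.2 i j ij) => //; by rewrite !inE eqxx ?orbT.
apply: comm_sym; apply: (commF (w := v)) ui.
- by apply: comm_sym; apply: gens; rewrite !inE eqxx ?orbT.
- by apply: comm_sym; apply: gens; rewrite !inE eqxx ?orbT.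
- by apply: comm_sym; apply: gens; rewrite !inE eqxx ?orbT.
- by apply: comm_sym; apply: gens; rewrite !inE eqxx ?orbT.
Qed.
End ASide.


Section Main.
Variables (F : fieldType) (n d : nat) (q : 'I_n -> F).
Hypothesis hq : forall i, q i != 0.

Lemma iop_list i j b t u : i != j -> u \in [:: Hop q i; Hiop q i; Xop F (n:=n) i; Yop d q i] ->
  GRing.comm (iop j b t) u.
Proof.
move=> ij; rewrite !inE => /or4P [] /eqP ->; rewrite /GRing.comm;
  try (by rewrite iop_comm // eq_sym).
rewrite /Yop mulrBr mulrBl; congr (_ - _); by rewrite iop_comm // eq_sym.
Qed.

Lemma B_rels : A_rels d q (@Xop F n) (Yop d q) (Hop q) (Hiop q).
Proof.
split.
  move=> i; split; [split; [exact: HopHi | exact: HiopH] | exact: XH | exact: YH | exact: XY | exact: YX].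
move=> i j ij u v ui; rewrite !inE => /or4P [] /eqP ->;
  try (apply: comm_sym; exact: iop_list ui).
rewrite /Yop; apply: commrB; apply: comm_sym; exact: iop_list ui.
Qed.
End Main.

Lemma alg_hom_sub (F : fieldType) (A B : algType F) (f : A -> B) :
  alg_hom f -> forall a b, f (a - b) = f a - f b.
Proof.
case=> fa fs _ _ a b; rewrite fa -scaleN1r fs scaleN1r //.
Qed.
Lemma alg_hom_exp (F : fieldType) (A B : algType F) (f : A -> B) :
  alg_hom f -> forall a k, f (a ^+ k) = f a ^+ k.
Proof.
case=> _ _ fm f1 a; elim=> [|k IH]; first by rewrite !expr0.
by rewrite !exprS fm IH.
Qed.
Lemma alg_hom_comp (F : fieldType) (A B C : algType F) (f : A -> B) (g : B -> C) :
  alg_hom f -> alg_hom g -> alg_hom (fun a => g (f a)).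
Proof.
case=> fa fs fm f1 [ga gs gm g1]; split.
- by move=> a b; rewrite fa ga.
- by move=> c a; rewrite fs gs.
- by move=> a b; rewrite fm gm.
- by rewrite f1 g1.
Qed.
Lemma alg_hom_rels (F : fieldType) (n d : nat) (q : 'I_n -> F) (A B : algType F) (f : A -> B)
  (x y h hi : 'I_n -> A) : alg_hom f -> A_rels d q x y h hi ->
  A_rels d q (fun i => f (x i)) (fun i => f (y i)) (fun i => f (h i)) (fun i => f (hi i)).
Proof.
move=> fh [r1 r2]; have fsub := alg_hom_sub fh; have fexp := alg_hom_exp fh.
case: fh => fa fs fm f1; split.
  move=> i; have [[hhi hih] xh yh xy yx] := r1 i.
  split.
  - by rewrite -fm hhi f1 -fm hih f1.
  - by rewrite -fm xh fs fm.
  - by rewrite -fm yh fs fm.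
  - by rewrite -fm xy fsub fexp fs f1.
  - by rewrite -fm yx fsub fexp f1.
move=> i j ij u v; rewrite !inE => /or4P [] /eqP -> /or4P [] /eqP ->;
  by rewrite -!fm (r2 i j ij) // !inE eqxx ?orbT.
Qed.

Lemma comm_inv (R : ringType) (a b c : R) :
  GRing.comm a b -> b * c = 1 -> c * b = 1 -> GRing.comm a c.
Proof.
rewrite /GRing.comm => ab bc cb.
by rewrite -[a * c]mul1r -cb -mulrA (mulrA b) -ab -!mulrA bc mulr1.
Qed.

Theorem corollary4p4 (F : fieldType) (n d : nat) (q : 'I_n -> F)
    (A : algType F) (x y h hi : 'I_n -> A) :
  (0 < n)%N -> (0 < d)%N ->
  (forall i, q i != 0) ->
  (forall i, q i ^+ d != 1) ->
  (exists i, exists m : nat, (0 < m)%N /\ q i ^+ m = 1) ->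
  is_A_presentation d q x y h hi ->
  exists f : A -> A, alg_hom f /\ ~ bijective f.
Proof.
move=> n0 d0 hq hqd [i0 [m [m0 qm]]] [rels univ].
pose L := m.+1.
have L2 : (1 < L)%N by rewrite ltnS.
have hq1 : q i0 != 1.
  by apply: contra (hqd i0) => /eqP ->; rewrite expr1n.
pose e := fun i : 'I_n => if i == i0 then L else 1%N.
have he : forall i, q i ^+ e i = q i.
  move=> i; rewrite /e; case: eqP => [->|_]; last by rewrite expr1.
  by rewrite exprSr qm mul1r.
have frels := fam_rels rels he.
have [f0 [f0h f0g _]] := univ A _ _ _ _ frels.
exists f0; split => // [[finv finvK fK]].
have [g [gh gg _]] := univ (Op F n) _ _ _ _ (B_rels d hq).
pose phi1 := fun a => g (f0 a).
have phi1h : alg_hom phi1 := alg_hom_comp f0h gh.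
have rels2 := alg_hom_rels phi1h rels.
have [k [kh kg kuniq]] := univ (Op F n) _ _ _ _ rels2.
pose U := Uop q i0 L. pose Ui := Uiop q i0 L.
have UUi' : U * Ui = 1 := UUi hq i0 L.
have UiU' : Ui * U = 1 := UiU hq i0 L.
pose phi2 := fun a => U * phi1 a * Ui.
have phi2h : alg_hom phi2.
  case: phi1h => pa ps pm p1; split.
  - by move=> a b; rewrite /phi2 pa mulrDr mulrDl.
  - by move=> c a; rewrite /phi2 ps -scalerAr -scalerAl.
  - by move=> a b; rewrite /phi2 pm -!mulrA (mulrA Ui) UiU' mul1r.
  - by rewrite /phi2 p1 mulr1 UUi'.
have cX : forall i, GRing.comm U (Xop F (n:=n) i).
  move=> i; case: (eqVneq i i0) => [->|ii0]; first exact: U_comm_X.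
  exact: U_comm_other.
have cXi : forall i, GRing.comm U (Xiop F (n:=n) i).
  move=> i; apply: (comm_inv (cX i)); [exact: XopXi | exact: XiopX].
have img : forall i, [/\ phi1 (x i) = Xop F i, phi1 (h i) = Hop q i ^+ e i,
   phi1 (hi i) = Hiop q i ^+ e i & phi1 (y i) = g (Y' d q y h e i)].
  move=> i; have [f1 f2 f3 f4] := f0g i; have [g1 g2 g3 g4] := gg i.
  rewrite /phi1 f1 f2 f3 f4 /X' /H' /Hi' g1 !(alg_hom_exp gh) g3 g4; split => //.
have cH : forall i, GRing.comm U (phi1 (h i)).
  move=> i; have [_ -> _ _] := img i.
  rewrite /e; case: (eqVneq i i0) => [->|ii0]; first (rewrite ?eqxx; exact: U_comm_HL).
  by apply: commrX; exact: U_comm_other.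
have cHi : forall i, GRing.comm U (phi1 (hi i)).
  move=> i; have [[r1 r2] _ _ _ _] := rels2.1 i.
  exact: (comm_inv (cH i) r1 r2).
have cY : forall i, GRing.comm U (phi1 (y i)).
  move=> i; have [_ _ _ xy _] := rels2.1 i.
  have [px _ _ _] := img i.
  have -> : phi1 (y i) = Xiop F i * ((q i *: phi1 (h i)) ^+ d - 1).
    by rewrite -xy px mulrA XiopX mul1r.
  apply: commrM => //; apply: commrB; last exact: commr1.
  by apply: commrX; apply: commZ.
have cx : forall i, GRing.comm U (phi1 (x i)).
  by move=> i; have [-> _ _ _] := img i.
have eq12 : forall a, phi1 a = phi2 a.
  move=> a; rewrite (kuniq phi1 phi1h) ?(kuniq phi2 phi2h) //.
    move=> i; rewrite /phi2; split; rewrite ?cx ?cY ?cH ?cHi -mulrA UUi' mulr1 //.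
have := eq12 (finv (h i0)); rewrite /phi2 /phi1 fK.
have [_ _ gh0 _] := gg i0 => E.
have : U * Hop q i0 = Hop q i0 * U.
  by rewrite -gh0 [in RHS]E -!mulrA UiU' mulr1.
by apply/eqP; exact: U_ncomm_H.
Qed.
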